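(* Let $G$ be a group with identity $e$, $A$ a finite set, $S\subseteq G$ finite with $e\in S$. Suppose $(\mathcal P,f)$ generates a local map $\mu:A^S\to A$, with $f$ well-behaved, $|S|\ge2$ and $|A|\ge3$. Then $e$ is essential for $\mu$.
   Context: $A^S$ is the set of functions $S\to A$. For $s\in S$, $\mathrm{Res}_s(z)=z|_{S\setminus\{s\}}$. An element $s\in S$ is essential for $\mu$ if there exist $z,w\in A^S$ with $\mathrm{Res}_s(z)=\mathrm{Res}_s(w)$ but $\mu(z)\neq\mu(w)$. The pair $(\mathcal P,f)$ generates $\mu$ if $\mathcal P=\{z\in A^S:\mu(z)\neq z(e)\}$ and $f:\mathcal P\to A$ is the restriction of $\mu$ to $\mathcal P$. The function $f$ is well-behaved if for all $p,q\in\mathcal P$: $p(e)=q(e)$ if and only if $f(p)=f(q)$. *)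

(* Defs.v *)
From Stdlib Require List.
From mathcomp Require Import all_boot.
Set Implicit Arguments. Unset Strict Implicit. Unset Printing Implicit Defensive.

Definition is_group (G : Type) (mul : G -> G -> G) (inv : G -> G) (e : G) : Prop :=
  (forall x y z, mul x (mul y z) = mul (mul x y) z) /\
  (forall x, mul e x = x /\ mul x e = x) /\
  (forall x, mul (inv x) x = e /\ mul x (inv x) = e).

Definition finite_subset (G : Type) (S : G -> Prop) : Prop :=
  exists l : list G, forall g, S g <-> List.In g l.

Definition elts (G : Type) (S : G -> Prop) := {g : G | S g}.
Definition config (G : Type) (S : G -> Prop) (A : Type) := elts S -> A.

Definition res_eq (G A : Type) (S : G -> Prop) (s : G) (z w : config S A) : Prop :=
  forall t : elts S, proj1_sig t <> s -> z t = w t.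

Definition essential (G A : Type) (S : G -> Prop) (mu : config S A -> A) (s : G) : Prop :=
  exists z w : config S A, res_eq s z w /\ mu z <> mu w.

(* (P, f) generates mu: P = {z | mu z <> z(e)} and f is mu restricted to P
   (f is given as a total function, only its values on P matter). *)
Definition generates (G A : Type) (S : G -> Prop) (e : G) (he : S e)
  (P : config S A -> Prop) (f : config S A -> A) (mu : config S A -> A) : Prop :=
  (forall z, P z <-> mu z <> z (exist _ e he)) /\
  (forall p, P p -> f p = mu p).

Definition well_behaved (G A : Type) (S : G -> Prop) (e : G) (he : S e)
  (P : config S A -> Prop) (f : config S A -> A) : Prop :=
  forall p q, P p -> P q ->
    (p (exist _ e he) = q (exist _ e he) <-> f p = f q).

(* Main.v *)
Require Import Defs.
From mathcomp Require Import all_boot.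
From Stdlib Require Import Classical ClassicalDescription.

Lemma two_others (A : finType) (c : A) : 3 <= #|A| ->
  exists x y : A, x != c /\ y != c /\ x != y.
Proof.
move=> h.
have hB : 1 < #|[set x | x != c]|.
  have := cardsC1 c. rewrite cardsE => E.
  have : #|[set x | x != c]| = #|A|.-1.
    rewrite -(@cardsC1 A c) /setC; apply: eq_card => x.
    by rewrite !inE.
  move=> ->; by case: #|A| h => // [[|[|n]]].
have : 0 < #|[set x | x != c]| by apply: ltnW.
rewrite card_gt0 => /set0Pn [x Hx].
have : 0 < #|[set x | x != c] :\ x|.
  by rewrite (cardsD1 x) Hx in hB.
rewrite card_gt0 => /set0Pn [y].
rewrite !inE => /andP [Hyx Hy].
rewrite inE in Hx.
by exists x, y; split => //; split => //; rewrite eq_sym.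
Qed.

Theorem mainTheorem5 (G : Type) (mul : G -> G -> G) (inv : G -> G) (e : G)
  (hG : is_group mul inv e)
  (A : finType) (S : G -> Prop) (hSfin : finite_subset S) (he : S e)
  (mu : config S A -> A) (P : config S A -> Prop) (f : config S A -> A)
  (hgen : generates he P f mu) (hwb : well_behaved he P f)
  (hS2 : exists s t : G, S s /\ S t /\ s <> t)
  (hA3 : 3 <= #|A|) :
  essential mu e.
Proof.
have [a0 _] : exists a : A, True.
  case: (pickP (@predT A)) => [a _|H]; first by exists a.
  by move: hA3; rewrite (eq_card0 H).
pose z (x : A) : config S A := fun t =>
  if excluded_middle_informative (proj1_sig t = e) then x else a0.
have ze : forall x, z x (exist _ e he) = x.
  move=> x; rewrite /z; case: excluded_middle_informative => //= H; by case: H.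
have zr : forall x y, res_eq e (z x) (z y).
  move=> x y; rewrite /res_eq => t Ht; rewrite /z.
  by case: excluded_middle_informative => // H; case: (Ht H).
apply: NNPP => Hne.
have Hc : forall x, mu (z x) = mu (z a0).
  move=> x; apply: NNPP => H; apply: Hne; exists (z x), (z a0); split => //.
case: (@two_others A (mu (z a0)) hA3) => x [y [Hx [Hy Hxy]]].
case: hgen => HP Hf.
have Px : P (z x) by apply/HP; rewrite ze Hc => E; rewrite E eqxx in Hx.
have Py : P (z y) by apply/HP; rewrite ze Hc => E; rewrite E eqxx in Hy.
have : f (z x) = f (z y) by rewrite !Hf // !Hc.
move/(hwb _ _ Px Py); rewrite !ze => E.
by rewrite E eqxx in Hxy.
Qed.
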